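(* Let $X \ge 1$. Let $P \subseteq \{1,\dots,X\}$ be an arithmetic progression of length $\ge X^{3/4}$. Let $\mathcal{Q}$ be a set of pairwise coprime positive integers with $\prod_{q \in \mathcal{Q}} q \ge X^{5/4}$, and suppose the common difference of $P$ is coprime to every $q \in \mathcal{Q}$. Let $S \subseteq \mathcal{Q}$ satisfy $(\max_{q \in \mathcal{Q}} q)^{|S|} \le X^{1/4}$, and let $T \subseteq S$. Let $a \in G_S$. Put $\mathcal{Q}' := \mathcal{Q} \setminus S$ and $P' := \{ x \in P : x \equiv a \pmod{\prod_{q \in S \setminus T} q}\}$ (where $a$ is reduced to a residue class modulo $\prod_{q\in S\setminus T}q$ via the Chinese remainder theorem). Then the lift $\Psi_{P',\mathcal{Q}'}$ is well-defined, and there is a real number $\eta$ with $|\eta| \le X^{-1/2}$ such that for every $f \in B(P)$, \[ \sigma_{S\to a}\, E_T\, \Psi_{P,\mathcal{Q}} f = (1+\eta)\, \Psi_{P',\mathcal{Q}'}\big(f|_{P'}\big). \]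
   Context: For a finite set $\Sigma$, $B(\Sigma)$ denotes the space of functions $\Sigma\to\mathbb{C}$. For a set $\mathcal{R}$ of pairwise coprime positive integers, $G_{\mathcal{R}} := \prod_{q\in\mathcal{R}} \mathbb{Z}/q\mathbb{Z}\cong \mathbb{Z}/(\prod_{q\in\mathcal{R}}q)\mathbb{Z}$ (Chinese remainder theorem), and $\pi_{\mathcal{R}}:\mathbb{Z}\to G_{\mathcal{R}}$ is the natural projection. Characters of $G_{\mathcal{Q}}$ are identified with $\xi=\sum_{q\in\mathcal{Q}}\xi_q/q \in \bigoplus_{q\in\mathcal{Q}}(\frac1q\mathbb{Z}/\mathbb{Z})$, acting as $x\mapsto e(\xi x)$, $e(t)=e^{2\pi i t}$; Fourier coefficients are $\widehat{g}(\xi)=\mathbb{E}_{x\in G_{\mathcal{Q}}}g(x)\overline{e(\xi x)}$ so that $g=\sum_\xi \widehat g(\xi)e(\xi\cdot)$. For $T\subseteq\mathcal{Q}$, the averaging operator $E_T$ on $B(G_{\mathcal{Q}})$ is the Fourier multiplier $E_T e(\xi\cdot)=w(\xi)e(\xi\cdot)$ with $w(\xi)=1$ if $\xi_q=0$ for all $q\in T$ and $w(\xi)=0$ otherwise. For $S\subseteq\mathcal{Q}$ and $a\in G_S$, identify $G_{\mathcal{Q}}=G_S\times G_{\mathcal{Q}\setminus S}$ and define the specialisation $\sigma_{S\to a}:B(G_{\mathcal{Q}})\to B(G_{\mathcal{Q}\setminus S})$ by $(\sigma_{S\to a}g)(y)=g(a,y)$. Lifting: if $\mathcal{R}$ is a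 set of pairwise coprime positive integers with $\prod_{q\in\mathcal{R}}q\ge X$ and $P\subseteq\{1,\dots,X\}$ is an arithmetic progression whose common difference is coprime to all $q\in\mathcal{R}$, then $\Psi_{P,\mathcal{R}}:B(P)\to B(G_{\mathcal{R}})$ is defined by $(\Psi_{P,\mathcal{R}}f)(\pi_{\mathcal{R}}(x)) = |P|^{-1}|G_{\mathcal{R}}|f(x)$ for $x\in P$, and $\Psi_{P,\mathcal{R}}f=0$ off $\pi_{\mathcal{R}}(P)$ (this is well-defined since $\pi_{\mathcal{R}}$ is injective on $P$). *)

(* Defs.v *)
From mathcomp Require Import all_boot all_order all_algebra.
From mathcomp Require Import all_classical all_reals all_analysis.
From mathcomp Require Import complex.
Import GRing.Theory Num.Theory.
Set Implicit Arguments. Unset Strict Implicit. Unset Printing Implicit Defensive.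
Local Open Scope ring_scope.
Local Open Scope complex_scope.

(* An element of G_Rs = prod_{q in Rs} Z/qZ is encoded as a function
   x : nat -> nat giving the residue x q in [0,q) for each modulus q in Rs
   (and 0 for moduli outside Rs).  Such an x is "in G_Rs". *)
Definition inG (Rs : seq nat) (x : nat -> nat) : Prop :=
  (forall q, q \in Rs -> (x q < q)%N) /\ (forall q, q \notin Rs -> x q = 0%N).

Definition upd (x : nat -> nat) (q r : nat) : nat -> nat :=
  fun n => if n == q then r else x n.

(* Enumeration of G_Rs (each element exactly once when Rs is duplicate-free). *)
Definition Genum (Rs : seq nat) : seq (nat -> nat) :=
  foldr (fun q acc => [seq upd x q r | x <- acc, r <- iota 0 q]) [:: fun _ => 0%N] Rs.

Definition cardG (Rs : seq nat) : nat := \prod_(q <- Rs) q.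





Section Analysis.
Variable R : realType.

Definition ee (t : R) : R[i] := (cos (2 * pi * t)) +i* (sin (2 * pi * t)).

(* xi . x for the character xi = sum_q xi_q / q *)
Definition pairing (Rs : seq nat) (xi x : nat -> nat) : R :=
  \sum_(q <- Rs) ((xi q * x q)%:R / q%:R).

Definition fhat (Rs : seq nat) (g : (nat -> nat) -> R[i]) (xi : nat -> nat) : R[i] :=
  ((cardG Rs)%:R)^-1 * \sum_(x <- Genum Rs) g x * (ee (pairing Rs xi x))^*.

Definition ET (Q T : seq nat) (g : (nat -> nat) -> R[i]) : (nat -> nat) -> R[i] :=
  fun x => \sum_(xi <- Genum Q | all (fun q => xi q == 0%N) T)
              fhat Q g xi * ee (pairing Q xi x).

(* Specialisation sigma_{S -> a} : B(G_Q) -> B(G_{Q \ S}),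
   (sigma g)(y) = g(a, y) under G_Q = G_S x G_{Q\S}. *)
Definition spec (S : seq nat) (a : nat -> nat) (g : (nat -> nat) -> R[i])
  : (nat -> nat) -> R[i] :=
  fun y => g (fun q => if q \in S then a q else y q).

Definition APseq (b d L : nat) : seq nat := [seq (b + d * k)%N | k <- iota 0 L].

Definition in_range (X : R) (P : seq nat) : Prop :=
  forall x, x \in P -> (1 <= x)%N /\ x%:R <= X.

(* The hypotheses under which the lift Psi_{P,Rs} is well-defined:
   P is an arithmetic progression in {1..X} whose common difference
   is coprime to every q in Rs, and prod_{q in Rs} q >= X. *)
Definition lift_ok (X : R) (P : seq nat) (Rs : seq nat) : Prop :=
  (exists b d L : nat, P = APseq b d L /\ (0 < d)%N /\
     forall q, q \in Rs -> coprime d q) /\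
  in_range X P /\ X <= (cardG Rs)%:R.

(* The lift Psi_{P,Rs} f: equals |P|^{-1}|G_Rs| f(x) at pi_Rs(x) for x in P,
   and 0 off pi_Rs(P).  (pi_Rs is injective on P when lift_ok holds, so the
   sum below has at most one nonzero term.) *)
Definition Psi (P : seq nat) (Rs : seq nat) (f : nat -> R[i]) : (nat -> nat) -> R[i] :=
  fun y => ((cardG Rs)%:R / (size P)%:R) *
           \sum_(x <- P | all (fun q => y q == (x %% q)%N) Rs) f x.

End Analysis.

(* Main.v *)
Require Import Defs.
From mathcomp Require Import all_boot all_order all_algebra.
From mathcomp Require Import all_classical all_reals all_analysis.
From mathcomp Require Import complex.
Import GRing.Theory Num.Theory.
Local Open Scope ring_scope.
Local Open Scope complex_scope.
From mathcomp Require Import ring lra zify.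
From Stdlib Require Import Lia.

Set Implicit Arguments. Unset Strict Implicit. Unset Printing Implicit Defensive.
Module NT.
Local Open Scope nat_scope.
Definition pcop (l : seq nat) := forall q q', q \in l -> q' \in l -> q != q' -> coprime q q'.

Lemma pcop_cons q l : pcop (q :: l) -> pcop l.
Proof. by move=> h x y hx hy; apply: h; rewrite inE ?hx ?hy orbT. Qed.

Lemma prod_coprime (p : nat) (l : seq nat) :
  (forall q, q \in l -> coprime p q) -> coprime p (\prod_(q <- l) q).
Proof.
elim: l => [|q l IH] H; first by rewrite big_nil coprimen1.
rewrite big_cons coprimeMr H ?inE ?eqxx //= IH // => x hx.
by apply: H; rewrite inE hx orbT.
Qed.

Lemma cop_head q l : uniq (q :: l) -> pcop (q :: l) -> coprime q (\prod_(x <- l) x).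
Proof.
move=> /andP [nq ul] hp; apply: prod_coprime => x hx; apply: hp.
- by rewrite inE eqxx.
- by rewrite inE hx orbT.
- by apply/eqP => e; rewrite e hx in nq.
Qed.

Lemma mod_prod (l : seq nat) n m : uniq l -> pcop l ->
  all (fun q => n == m %[mod q]) l = (n == m %[mod \prod_(q <- l) q]).
Proof.
elim: l => [|q l IH] ul hp; first by rewrite big_nil !modn1.
rewrite big_cons chinese_remainder ?cop_head //= IH //.
  by case/andP: ul.
exact: pcop_cons hp.
Qed.

Lemma crt_exists (l : seq nat) (a : nat -> nat) : uniq l -> pcop l ->
  exists c, forall q, q \in l -> c = a q %[mod q].
Proof.
elim: l => [|q l IH] ul hp; first by exists 0.
have [c hc] := IH (proj2 (andP ul)) (pcop_cons hp).
have cq := cop_head ul hp.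
exists (chinese q (\prod_(x <- l) x) (a q) c) => x; rewrite inE => /orP [/eqP ->|hx].
  exact: chinese_modl.
rewrite -(hc x hx).
have dx : x %| \prod_(y <- l) y.
  by rewrite (big_rem x hx) /= dvdn_mulr.
by rewrite -(modn_dvdm _ dx) chinese_modr // (modn_dvdm _ dx).
Qed.

Lemma mod_cancel d M k k1 : coprime d M ->
  (d * k == d * k1 %[mod M]) = (k == k1 %[mod M]).
Proof.
move=> cd.
wlog h : k k1 / k1 <= k.
  move=> W; case: (leqP k1 k) => hk; first exact: W.
  by rewrite eq_sym W 1?eq_sym // ltnW.
rewrite !eqn_mod_dvd ?leq_mul2l ?h ?orbT // -mulnBr Gauss_dvdr //.
by rewrite coprime_sym.
Qed.

Lemma char_k0 (l : seq nat) (a : nat -> nat) (b d : nat) : uniq l -> pcop l ->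
  (forall q, q \in l -> coprime d q) -> (forall q, q \in l -> a q < q) ->
  exists2 k0, k0 < \prod_(q <- l) q &
    forall k, all (fun q => (b + d * k) %% q == a q) l = (k %% \prod_(q <- l) q == k0).
Proof.
move=> ul hp hd ha.
have M0 : 0 < \prod_(q <- l) q.
  elim: l {ul hp hd} ha => [|q l IH] ha; first by rewrite big_nil.
  rewrite big_cons muln_gt0 IH ?andbT; last by move=> x hx; apply: ha; rewrite inE hx orbT.
  by apply: leq_ltn_trans (ha q _); rewrite ?inE ?eqxx.
set M := \prod_(q <- l) q in M0 *.
have [c hc] := crt_exists a ul hp.
have cdM : coprime d M by apply: prod_coprime.
have [a0 _ ha0] := Bezoutr d M0.
rewrite (eqP cdM) in ha0.
set k1 := a0 * (b + (M - 1) * c).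
have hk1 : b + d * k1 == c %[mod M].
  rewrite -(eqn_modDr ((M - 1) * c)).
  have -> : c + (M - 1) * c = M * c by rewrite -{1}(mul1n c) -mulnDl addnC subnK.
  have -> : b + d * k1 + (M - 1) * c = (1 + a0 * d) * (b + (M - 1) * c).
    by rewrite /k1 mulnDl mul1n mulnA (mulnC d a0) addnAC.
  by rewrite -modnMml (eqP ha0) mul0n mod0n modnMr.
exists (k1 %% M); first by rewrite ltn_pmod.
move=> k.
have -> : all (fun q => (b + d * k) %% q == a q) l = all (fun q => b + d * k == c %[mod q]) l.
  apply: eq_in_all => q hq; by rewrite (hc q hq) (modn_small (ha q hq)).
rewrite mod_prod // -/M.
rewrite (_ : (b + d * k == c %[mod M]) = (b + d * k == b + d * k1 %[mod M])).
  by rewrite eqn_modDl mod_cancel.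
by rewrite (eqP hk1).
Qed.

Lemma filter_iota_mod M k0 L : 0 < M -> k0 < M ->
  [seq k <- iota 0 L | k %% M == k0] =
  map (fun j => k0 + M * j) (iota 0 ((L + (M - 1 - k0)) %/ M)).
Proof.
move=> M0 kM.
set D := M - 1 - k0.
have kD : k0 + D = M - 1 by rewrite /D; lia.
elim: L => [|L IH]; first by rewrite /= divn_small //; lia.
rewrite -addn1 iotaD filter_cat IH /= add0n.
rewrite (_ : L + 1 + D = (L + D).+1); last by lia.
rewrite divnS //.
have key : (M %| (L + D).+1) = (L %% M == k0).
  rewrite (_ : (L + D).+1 = L + (M - k0)); last by lia.
  rewrite /dvdn {1}(_ : 0 = (k0 + (M - k0)) %% M); last first.
    by rewrite subnKC ?modnn // ltnW.
  by rewrite eqn_modDr (modn_small kM).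
rewrite key; case: eqP => hL; last by rewrite add0n cats0.
rewrite add1n -addn1 iotaD map_cat /= add0n.
congr (_ ++ [:: _]).
have eL := divn_eq L M; rewrite hL in eL.
have -> : L + D = L %/ M * M + (M - 1) by rewrite -kD addnA -eL.
have h1 : M - 1 < M by lia.
rewrite divnMDl // (divn_small h1) addn0.
by rewrite mulnC addnC -eL.
Qed.

Lemma count_bound M k0 L : 0 < M -> k0 < M ->
  M * ((L + (M - 1 - k0)) %/ M) <= L + M /\ L <= M * ((L + (M - 1 - k0)) %/ M) + M.
Proof.
move=> M0 kM.
have e := divn_eq (L + (M - 1 - k0)) M.
have lt := ltn_pmod (L + (M - 1 - k0)) M0.
set N := (L + (M - 1 - k0)) %/ M in e *.
set r := (L + (M - 1 - k0)) %% M in e lt.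
split; nia.
Qed.

Lemma prod_split (Q S : seq nat) (Pr : pred nat) : uniq Q -> uniq S -> {subset S <= Q} ->
  \prod_(q <- Q | Pr q) q = \prod_(q <- S | Pr q) q * \prod_(q <- Q | Pr q && (q \notin S)) q.
Proof.
move=> uQ uS SQ.
rewrite (bigID (fun q => q \in S)) /=.
have -> : \prod_(q <- Q | Pr q && (q \in S)) q = \prod_(q <- S | Pr q) q.
  rewrite -big_filter -[RHS]big_filter; apply: perm_big; apply: uniq_perm; rewrite ?filter_uniq //.
  move=> z; rewrite !mem_filter.
  by case: (boolP (z \in S)) => hz; [rewrite (SQ z hz) | ]; rewrite ?andbT ?andbF.
by [].
Qed.

Lemma prod_le_max (l : seq nat) m : (forall q, q \in l -> q <= m) ->
  \prod_(q <- l) q <= m ^ size l.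
Proof.
elim: l => [|q l IH] h; first by rewrite big_nil.
rewrite big_cons /= expnS leq_mul ?h ?inE ?eqxx // IH // => z hz.
by apply: h; rewrite inE hz orbT.
Qed.

Lemma prod_filter_le (l : seq nat) (Pr : pred nat) : (forall q, q \in l -> 0 < q) ->
  \prod_(q <- l | Pr q) q <= \prod_(q <- l) q.
Proof.
elim: l => [|q l IH] h; first by rewrite !big_nil.
have q0 : 0 < q by apply: h; rewrite inE eqxx.
have IH' : \prod_(q <- l | Pr q) q <= \prod_(q <- l) q.
  by apply: IH => z hz; apply: h; rewrite inE hz orbT.
rewrite !big_cons; case: (Pr q); first by rewrite leq_mul2l IH' orbT.
by apply: leq_trans IH' _; rewrite leq_pmull.
Qed.
End NT.
Import NT.

Section E.
Variable R : realType.
Implicit Types s t : R.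
Lemma eeD s t : ee (s + t) = ee s * ee t.
Proof.
rewrite /ee mulrDr cosD sinD.
rewrite [RHS]/GRing.mul /=. congr (_ +i* _); ring.
Qed.
Lemma ee0 : ee (0 : R) = 1.
Proof. by rewrite /ee mulr0 cos0 sin0. Qed.
Lemma ee1 : ee (1 : R) = 1.
Proof. rewrite /ee mulr1 (_ : 2 * pi = pi *+ 2) ?cos2pi ?sin2pi //. by rewrite mulr_natl. Qed.
Lemma eeN1 t : ee t = 1 -> ee (-t) = 1.
Proof. move=> h. have := eeD t (-t). by rewrite subrr ee0 h mul1r. Qed.
Lemma ee_conj t : Num.conj (ee t) = ee (- t).
Proof. by rewrite /ee mulrN cosN sinN. Qed.
Lemma eeMn (n : nat) t : ee (n%:R * t) = ee t ^+ n.
Proof.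
elim: n => [|n IH]; first by rewrite mul0r ee0 expr0.
by rewrite -addn1 natrD mulrDl mul1r eeD IH exprD expr1.
Qed.
Lemma ee_nat (n : nat) : ee (n%:R : R) = 1.
Proof. by rewrite -(mulr1 n%:R) eeMn ee1 expr1n. Qed.
Lemma ee_sum (I : Type) (l : seq I) (F : I -> R) :
  ee (\sum_(i <- l) F i) = \prod_(i <- l) ee (F i).
Proof.
elim: l => [|i l IH]; first by rewrite !big_nil ee0.
by rewrite !big_cons eeD IH.
Qed.
Lemma ee_ne1_pos t : 0 < t < 1 -> ee t != 1.
Proof.
move=> /andP [t0 t1]; apply/eqP => h.
have hc : cos (2 * pi * t) = 1 by move: h; rewrite /ee => -[].
have hs : 0 < sin (pi * t).
  apply: sin_gt0_pi; rewrite mulr_gt0 ?pi_gt0 //=.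
  by rewrite -{2}(mulr1 pi) ltr_pM2l ?pi_gt0.
move: hc; rewrite (_ : 2 * pi * t = pi * t + pi * t); last by ring.
rewrite cosD -!expr2 cos2sin2 => e.
have : sin (pi * t) ^+ 2 = 0 by move: e; lra.
by move/eqP; rewrite sqrf_eq0 (Order.POrderTheory.gt_eqF hs).
Qed.
Lemma ee_ne1 t : t != 0 -> -1 < t < 1 -> ee t != 1.
Proof.
move=> t0 /andP [t1 t2].
case: (ltrgtP t 0) => h; last by rewrite h eqxx in t0.
  apply/eqP => /eeN1 /eqP; apply/negP/ee_ne1_pos.
  by rewrite oppr_gt0 h /= ltrNl.
by apply: ee_ne1_pos; rewrite h t2.
Qed.

Lemma sum_Genum (Q : seq nat) (h : nat -> nat -> R[i]) : uniq Q ->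
  \sum_(x <- Genum Q) \prod_(q <- Q) h q (x q) = \prod_(q <- Q) \sum_(r <- iota 0 q) h q r.
Proof.
elim: Q => [|q Q IH] uQ; first by rewrite /= big_cons !big_nil addr0.
case/andP: uQ => qQ uQ.
change (Genum (q :: Q)) with [seq upd x q r | x <- Genum Q, r <- iota 0 q].
rewrite big_allpairs_dep big_cons -IH // mulr_sumr; apply: eq_bigr => x _.
rewrite mulr_suml; apply: eq_bigr => r _.
rewrite big_cons /upd eqxx; congr (_ * _); apply: eq_big_seq => q' hq'.
have : q' != q by apply/eqP => e; rewrite -e hq' in qQ.
by move/negbTE => ->.
Qed.

Lemma sum_iota_pick (q i : nat) (F : nat -> R[i]) : (i < q)%N ->
  \sum_(s <- iota 0 q) (s == i)%:R * F s = F i.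
Proof.
move=> iq.
rewrite (bigD1_seq i) ?mem_iota ?iota_uniq //= eqxx mul1r big1 ?addr0 //.
by move=> s /negbTE ->; rewrite mul0r.
Qed.

Lemma rootsum (q u v : nat) : (0 < q)%N -> (u < q)%N -> (v < q)%N ->
  \sum_(r <- iota 0 q) ee (((r * u)%:R : R) / q%:R) * ee (- (((r * v)%:R : R) / q%:R))
  = (u == v)%:R * q%:R.
Proof.
move=> q0 uq vq.
have qR : (0 : R) < q%:R by rewrite ltr0n.
set z := ee ((u%:R - v%:R) / (q%:R : R)).
have ez : forall r, ee (((r * u)%:R : R) / q%:R) * ee (- (((r * v)%:R : R) / q%:R)) = z ^+ r.
  by move=> r; rewrite -eeD -eeMn /z; congr ee; rewrite !natrM; ring.
under eq_bigr => r _ do rewrite ez.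
rewrite (_ : iota 0 q = index_iota 0 q); last by rewrite /index_iota subn0.
rewrite big_mkord.
case: (eqVneq u v) => [e|ne].
  rewrite /z e subrr mul0r ee0.
  under eq_bigr => r _ do rewrite expr1n.
  by rewrite sumr_const card_ord /= mulr1n mul1r.
have zq : z ^+ q = 1.
  rewrite /z -eeMn (_ : q%:R * ((u%:R - v%:R) / q%:R) = (u%:R - v%:R : R)); last first.
    by field; rewrite pnatr_eq0 -lt0n.
  by rewrite eeD ee_nat (eeN1 (ee_nat v)) mulr1.
have z1 : z != 1.
  have uR : (u%:R : R) < q%:R by rewrite ltr_nat.
  have vR : (v%:R : R) < q%:R by rewrite ltr_nat.
  have u0 : (0 : R) <= u%:R by rewrite ler0n.
  have v0 : (0 : R) <= v%:R by rewrite ler0n.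
  apply: ee_ne1.
    rewrite mulf_neq0 ?invr_eq0 ?pnatr_eq0 -?lt0n // subr_eq0 eqr_nat.
    by [].
  rewrite ltr_pdivrMr // ltr_pdivlMr //; apply/andP; split; lra.
have := subrX1 z q; rewrite zq subrr => /esym /eqP.
by rewrite mulf_eq0 subr_eq0 (negbTE z1) /= => /eqP ->; rewrite mul0r.
Qed.

Lemma prod_nat_all (l : seq nat) (B : nat -> bool) :
  \prod_(i <- l) ((B i)%:R : R[i]) = (all B l)%:R.
Proof.
elim: l => [|i l IH]; first by rewrite big_nil.
by rewrite big_cons IH -natrM mulnb.
Qed.

Lemma prod_if (l T : seq nat) (B : nat -> bool) :
  \prod_(q <- l) (if q \in T then 1 else (B q)%:R * q%:R)
  = (\prod_(q <- l | q \notin T) q)%:R * (all (fun q => (q \in T) || B q) l)%:R :> R[i].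
Proof.
elim: l => [|q l IH]; first by rewrite !big_nil /= mulr1.
rewrite !big_cons IH /=; case: (q \in T) => /=; first by rewrite mul1r.
rewrite natrM; case: (B q) => /=; last by rewrite !mul0r mulr0.
by rewrite mul1r mulrA.
Qed.

Lemma pairing_conj (Q : seq nat) xi y :
  Num.conj (ee (pairing R Q xi y)) = \prod_(q <- Q) ee (- (((xi q * y q)%:R : R) / q%:R)).
Proof. by rewrite ee_conj /pairing -sumrN ee_sum. Qed.

Lemma pairing_prod (Q : seq nat) xi y :
  ee (pairing R Q xi y) = \prod_(q <- Q) ee (((xi q * y q)%:R : R) / q%:R).
Proof. by rewrite /pairing ee_sum. Qed.

Lemma fhat_Psi (Q P : seq nat) (f : nat -> R[i]) xi :
  uniq Q -> (forall q, q \in Q -> (0 < q)%N) ->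
  fhat Q (Psi P Q f) xi = (size P)%:R^-1 *
     \sum_(p <- P) f p * \prod_(q <- Q) ee (- (((xi q * (p %% q))%:R : R) / q%:R)).
Proof.
move=> uQ Qpos.
have G0 : (cardG Q)%:R != 0 :> R[i].
  by rewrite pnatr_eq0 -lt0n /cardG big_seq; apply: prodn_cond_gt0.
rewrite /fhat /Psi.
under eq_bigr => y _ do rewrite -!mulrA.
rewrite -mulr_sumr !mulrA mulVf // mul1r -mulr_sumr; congr (_ * _).
under eq_bigr => y _ do rewrite big_mkcond mulr_suml.
rewrite exchange_big /=; apply: eq_bigr => p _.
transitivity (f p * \sum_(y <- Genum Q) (all (fun q => y q == (p %% q)%N) Q)%:R * (ee (pairing R Q xi y))^*).
  rewrite mulr_sumr; apply: eq_bigr => y _.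
  by case: (all _ _); rewrite /= ?mulr1n ?mulr0n ?mul1r ?mul0r ?mulr0.
congr (_ * _).
rewrite (eq_bigr (fun y : nat -> nat => \prod_(q <- Q)
   ((y q == (p %% q)%N)%:R * ee (- (((xi q * y q)%:R : R) / q%:R))))); last first.
  by move=> y _; rewrite -(prod_nat_all Q (fun q => y q == (p %% q)%N)) pairing_conj -big_split.
rewrite (sum_Genum (fun q s : nat => (s == (p %% q)%N)%:R * ee (- (((xi q * s)%:R : R) / q%:R)))) //.
apply: eq_big_seq => q hq; rewrite sum_iota_pick // ltn_pmod //; exact: Qpos.
Qed.

Lemma ET_Psi (Q T P : seq nat) (f : nat -> R[i]) (x : nat -> nat) :
  uniq Q -> (forall q, q \in Q -> (0 < q)%N) -> {subset T <= Q} ->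
  (forall q, q \in Q -> (x q < q)%N) ->
  ET Q T (Psi P Q f) x = ((\prod_(q <- Q | q \notin T) q)%:R / (size P)%:R) *
    \sum_(p <- P | all (fun q => (q \in T) || (x q == (p %% q)%N)) Q) f p.
Proof.
move=> uQ Qpos TQ xQ.
rewrite /ET.
rewrite big_mkcond /=.
transitivity (\sum_(xi <- Genum Q) (size P)%:R^-1 * \sum_(p <- P) f p *
   \prod_(q <- Q) (((q \notin T) || (xi q == 0%N))%:R *
     (ee (((xi q * x q)%:R : R) / q%:R) * ee (- (((xi q * (p %% q))%:R : R) / q%:R))))).
  apply: eq_bigr => xi _; rewrite fhat_Psi //.
  have -> : all (fun q => xi q == 0%N) T = all (fun q => (q \notin T) || (xi q == 0%N)) Q.
    apply/allP/allP => h q hq.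
      by case: (boolP (q \in T)) => //= hT; exact: h.
    by have := h q (TQ q hq); rewrite hq.
  rewrite [in RHS](eq_bigr (fun p => f p * ((all (fun q => (q \notin T) || (xi q == 0%N)) Q)%:R *
     (ee (pairing R Q xi x) * \prod_(q <- Q) ee (- (((xi q * (p %% q))%:R : R) / q%:R)))))); last first.
    by move=> p _; rewrite big_split big_split /= prod_nat_all -pairing_prod.
  case: (all _ _); rewrite /=.
    rewrite -mulrA mulr_suml; congr (_ * _); apply: eq_bigr => p _; rewrite mul1r; ring.
  rewrite big1 ?mulr0 // => p _; by rewrite mul0r mulr0.
rewrite -mulr_sumr (mulrC _ (size P)%:R^-1) -mulrA; congr (_ * _).
rewrite exchange_big /=.
under eq_bigr => p _ do rewrite -mulr_sumr.
rewrite mulr_sumr [in RHS]big_mkcond; apply: eq_bigr => p _.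
rewrite (sum_Genum (fun q r : nat => ((q \notin T) || (r == 0%N))%:R *
   (ee (((r * x q)%:R : R) / q%:R) * ee (- (((r * (p %% q))%:R : R) / q%:R))))) //.
rewrite (eq_big_seq (fun q => if q \in T then 1 else (x q == (p %% q)%N)%:R * q%:R)); last first.
  move=> q hq; have q0 := Qpos q hq; case hT: (q \in T) => /=.
    rewrite (sum_iota_pick (fun r : nat => ee (((r * x q)%:R : R) / q%:R) *
       ee (- (((r * (p %% q))%:R : R) / q%:R)))) //.
    by rewrite !mul0n mul0r oppr0 ee0 mulr1.
  under eq_bigr => r _ do rewrite mul1r.
  by rewrite rootsum // ?xQ // ltn_pmod.
rewrite prod_if.
by case: (all _ _); rewrite /= ?mulr1n ?mulr0n ?mulr1 ?mulr0 // mulrC.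
Qed.
End E.

Unset Implicit Arguments.
Import Order.TTheory.

Theorem lemma3p2 (R : realType) (X : R) (b d L : nat) (Q S T : seq nat)
  (a : nat -> nat) :
  1 <= X ->
  (* P = {b, b+d, ..., b+(L-1)d} subset of {1..X}, of length >= X^{3/4} *)
  (0 < d)%N ->
  in_range X (APseq b d L) ->
  X `^ (3/4) <= L%:R ->
  (* Q : pairwise coprime positive integers with product >= X^{5/4} *)
  uniq Q ->
  (forall q, q \in Q -> (0 < q)%N) ->
  (forall q q', q \in Q -> q' \in Q -> q != q' -> coprime q q') ->
  X `^ (5/4) <= (cardG Q)%:R ->
  (forall q, q \in Q -> coprime d q) ->
  (* S subset of Q with (max Q)^|S| <= X^{1/4}; T subset of S; a in G_S *)
  uniq S -> {subset S <= Q} ->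
  (((\max_(q <- Q) q) ^ size S)%N)%:R <= X `^ (1/4) ->
  uniq T -> {subset T <= S} ->
  inG S a ->
  let P := APseq b d L in
  let Q' := [seq q <- Q | q \notin S] in
  let P' := [seq x <- P | all (fun q => (x %% q)%N == a q) [seq q <- S | q \notin T]] in
  lift_ok X P' Q' /\
  exists eta : R, `|eta| <= X `^ (-1/2) /\
    forall (f : nat -> R[i]) (y : nat -> nat), inG Q' y ->
      spec S a (ET Q T (Psi P Q f)) y = (1 + eta%:C) * Psi P' Q' f y.
Proof.
move=> X1 d0 hrange hL uQ Qpos Qcop hQ5 dcop uS SQ hmax uT TS [aS aS0] P Q' P'.
set ST := [seq q <- S | q \notin T].
have uST : uniq ST by rewrite filter_uniq.
have STS : {subset ST <= S} by move=> q; rewrite mem_filter => /andP [].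
have pST : pcop ST.
  by move=> q q' hq hq' ne; apply: Qcop => //; apply/SQ/STS.
have dST : forall q, q \in ST -> coprime d q by move=> q hq; apply/dcop/SQ/STS.
have aST : forall q, q \in ST -> (a q < q)%N by move=> q hq; apply/aS/STS.
have [k0 k0M hk0] := char_k0 b uST pST dST aST.
set M := \prod_(q <- ST) q in k0M hk0.
have M0 : (0 < M)%N by apply: leq_ltn_trans k0M.
set N := ((L + (M - 1 - k0)) %/ M)%N.
have hP' : P' = APseq (b + d * k0) (d * M) N.
  rewrite /P' /P /APseq filter_map.
  rewrite (eq_filter (a2 := fun k : nat => (k %% M)%N == k0)); last by move=> k; rewrite /preim /= hk0.
  rewrite filter_iota_mod // -map_comp; apply: eq_map => j /=.
  by rewrite mulnDr mulnA addnA.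
have sP' : size P' = N by rewrite hP' /APseq size_map size_iota.
have sP : size P = L by rewrite /P /APseq size_map size_iota.
have [cb1 cb2] := count_bound L M0 k0M.
rewrite -/N in cb1 cb2.
have hQ'S : (cardG Q = cardG S * cardG Q')%N.
  have h := @prod_split Q S (fun _ => true) uQ uS SQ.
  by rewrite /= in h; rewrite /cardG /Q' big_filter.
have hKp : (\prod_(q <- Q | q \notin T) q = M * cardG Q')%N.
  rewrite (prod_split (fun q => q \notin T) uQ uS SQ) /M /ST big_filter /cardG /Q' big_filter.
  rewrite (@eq_bigl _ _ _ _ _ (fun q => (q \notin T) && (q \notin S)) (fun q => q \notin S)) // => q.
  case: (boolP (q \in S)) => hs; first by rewrite andbF.
  rewrite andbT; apply/negP => /TS; by rewrite (negbTE hs).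
have cSmax : (cardG S <= (\max_(q <- Q) q) ^ size S)%N.
  by apply: prod_le_max => q hq; exact: leq_bigmax_seq (SQ q hq) _.
have MS : (M <= cardG S)%N.
  by rewrite /M /ST big_filter; apply: prod_filter_le => q hq; apply/Qpos/SQ.
have X0 : 0 < X by apply: lt_le_trans X1.
have u0 : 0 < X `^ (1/4) := powR_gt0 _ X0.
have v0 : 0 < X `^ (3/4) := powR_gt0 _ X0.
have MX : M%:R <= X `^ (1/4) :> R.
  by apply: le_trans hmax; rewrite ler_nat; exact: leq_trans MS cSmax.
have cSX : (cardG S)%:R <= X `^ (1/4) :> R.
  by apply: le_trans hmax; rewrite ler_nat.
have L0 : 0 < L%:R :> R by apply: lt_le_trans v0 hL.
split.
  split; [|split].
  - exists (b + d * k0)%N, (d * M)%N, N; split => //; split; first by rewrite muln_gt0 d0 M0.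
    move=> q; rewrite mem_filter => /andP [qS qQ]; rewrite coprimeMl dcop //=.
    rewrite coprime_sym /M; apply: prod_coprime => q' hq'; apply: Qcop => //; first by apply/SQ/STS.
    by apply/eqP => e; move: qS; rewrite e (STS q' hq').
  - by move=> z; rewrite /P' mem_filter => /andP [_ hz]; exact: hrange.
  - have e5 : X `^ (5/4) = X `^ (1/4) * X.
      rewrite (_ : (5/4 : R) = 1/4 + 1); last by lra.
      by rewrite powRD ?powRr1 ?ltW // lt0r_neq0 // implybT.
    have : X `^ (1/4) * X <= X `^ (1/4) * (cardG Q')%:R.
      rewrite -e5; apply: le_trans hQ5 _; rewrite hQ'S natrM ler_wpM2r //.
    by rewrite ler_pM2l.
exists ((M * N)%:R / L%:R - 1); split.
  have hMN : `|(M * N)%:R / L%:R - 1| <= M%:R / L%:R :> R.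
    have -> : (M * N)%:R / L%:R - 1 = ((M * N)%:R - L%:R) / L%:R :> R.
      by field; rewrite lt0r_neq0.
    rewrite normrM normfV (gtr0_norm L0); apply: ler_wpM2r; first by rewrite invr_ge0 ltW.
    have c1 : ((M * N)%:R : R) <= L%:R + M%:R by rewrite -natrD ler_nat.
    have c2 : (L%:R : R) <= (M * N)%:R + M%:R by rewrite -natrD ler_nat.
    rewrite ler_norml; apply/andP; split; lra.
  apply: le_trans hMN _.
  have -> : X `^ (-1/2) = X `^ (1/4) / X `^ (3/4).
    rewrite -powRB; last by rewrite lt0r_neq0 // implybT.
    congr (_ `^ _); lra.
  have M0R : (0 : R) <= M%:R by rewrite ler0n.
  rewrite ler_pdivrMr // mulrAC ler_pdivlMr //; nra.
move=> f y [yQ yQ0].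
have xQ : forall q, q \in Q -> ((fun q => if q \in S then a q else y q) q < q)%N.
  move=> q hq /=; case: ifP => hs; first exact: aS.
  by apply: yQ; rewrite mem_filter hs hq.
rewrite /spec (ET_Psi _ _ uQ Qpos (fun q hq => SQ q (TS q hq)) xQ) sP.
rewrite /Psi.
have hsum : \sum_(p <- P' | all (fun q => y q == (p %% q)%N) Q') f p =
    \sum_(p <- P | all (fun q => (q \in T) ||
        ((if q \in S then a q else y q) == (p %% q)%N)) Q) f p.
  rewrite /P' big_filter_cond; apply: eq_bigl => p.
  apply/andP/allP.
    move=> [h1 h2] q hq; case: (boolP (q \in T)) => //= hT; case: ifP => hs.
      have : q \in ST by rewrite mem_filter hT hs.
      by move/(allP h1); rewrite eq_sym.
    have : q \in Q' by rewrite mem_filter hs hq.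
    by move/(allP h2).
  move=> h; split; apply/allP => q hq.
    have qS := STS q hq.
    have qT : q \notin T by move: hq; rewrite mem_filter => /andP [].
    by have := h q (SQ q qS); rewrite (negbTE qT) qS /= eq_sym.
  move: hq; rewrite mem_filter => /andP [qS qQ].
  have qT : q \notin T by apply/negP => /TS; rewrite (negbTE qS).
  by have := h q qQ; rewrite (negbTE qT) (negbTE qS).
rewrite -hsum hKp sP'.
case: (eqVneq N 0%N) => [N0|Nn0].
  by rewrite hP' N0 /APseq /= !big_nil !mulr0.
rewrite mulrA; congr (_ * _).
have -> : ((M * N)%:R / L%:R - 1 : R)%:C = (M * N)%:R / L%:R - 1 :> R[i].
  by rewrite rmorphB rmorph1 rmorphM fmorphV !rmorph_nat.
have NR : (N%:R : R[i]) != 0 by rewrite pnatr_eq0.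
have LR : (L%:R : R[i]) != 0 by rewrite pnatr_eq0 -lt0n -(ltr0n R).
rewrite addrC subrK !natrM; field.
by apply/andP; split; [exact: NR | exact: LR].
Qed.
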